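(* Let $\Theta=((\lambda_a)_{a\in A_1},(\mu_a)_{a\in A_2},(\gamma_a)_{a\in A_3})$ be a tuple of partitions of multidegree $\bar r=(r_a)_{a\in A}$ (so $|\lambda_a|=r_a$ for $a\in A_1$, $|\mu_a|=r_a$ for $a\in A_2$, $|\gamma_a|=r_a$ for $a\in A_3$). If $\mathrm{Hom}_{H(\mathbf t)}(\Lambda_2(\Theta),\Lambda_1(\Theta))\neq0$, then $r_2=r_3$, where $r_2=\sum_{a\in A_2}r_a=|\mu_{A_2}|$ and $r_3=\sum_{a\in A_3}r_a=|\gamma_{A_3}|$. Moreover: (1) for every $i\in V_{ord}$, $\sum_{a\in A,\,t(a)=i}r_a=\sum_{a\in A,\,i(a)=i}r_a$; (2) for every $q\in\Omega$, $\sum_{a\in A,\,t(a)=i_q}r_a+\sum_{a\in A,\,i(a)=j_q}r_a=\sum_{a\in A,\,i(a)=i_q}r_a+\sum_{a\in A,\,t(a)=j_q}r_a$.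
   Context: $K$ is an algebraically closed field. $Q=(V,A,i,t)$ is a quiver ($i(a),t(a)$ origin and end of $a$) with partition $V=V_{ord}\sqcup\bigsqcup_{q\in\Omega}V_q$, $V_q=\{i_q,j_q\}$, and dimension vector $\mathbf d$ with $d_{i_q}=d_{j_q}=:d_q$. $E_i$ is a $K$-space of dimension $d_i$, identified with $K^{d_q}$ for $i\in V_q$; $W_i=E_i^*$ if $i=j_q$ for some $q$, else $W_i=E_i$. $H(\mathbf t)=\prod_{i\in V_{ord}}GL(E_i)\times\prod_{q\in\Omega}GL(d_q)$, where $GL(d_q)$ acts naturally on both $E_{i_q}=E_{j_q}=K^{d_q}$; it acts diagonally on tensor products. Standing assumption: there is no arrow $a$ with $W_{i(a)}=E_{i(a)}^*$ and $W_{t(a)}=E_{t(a)}^*$, so $A=A_1\sqcup A_2\sqcup A_3$ with $A_1=\{a: W_{i(a)}=E_{i(a)},W_{t(a)}=E_{t(a)}\}$, $A_2=\{a: W_{i(a)}=E_{i(a)},W_{t(a)}=E_{t(a)}^*\}$, $A_3=\{a: W_{i(a)}=E_{i(a)}^*,W_{t(a)}=E_{t(a)}\}$. A partition is a nonincreasing tuple of nonnegative integers; for $\lambda=(\lambda_1,\dots,\lambda_s)$, $\Lambda^\lambda(E)=\Lambda^{\lambda_1}(E)\otimes\cdots\otimes\Lambda^{\lambda_s}(E)$. Define $\Lambda_1(\Theta)=\bigotimes_{a\in A_1}\Lambda^{\lambda_a}(E_{i(a)})\otimes\bigotimes_{a\in A_2}\big(\Lambda^{\mu_a}(E_{t(a)})\otimes\Lambda^{\mu_a}(E_{i(a)})\big)$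 and $\Lambda_2(\Theta)=\bigotimes_{a\in A_1}\Lambda^{\lambda_a}(E_{t(a)})\otimes\bigotimes_{a\in A_3}\big(\Lambda^{\gamma_a}(E_{t(a)})\otimes\Lambda^{\gamma_a}(E_{i(a)})\big)$, as $H(\mathbf t)$-modules. *)

(* Defs.v *)
From HB Require Import structures.
From mathcomp Require Import all_boot all_order all_algebra.
Set Implicit Arguments. Unset Strict Implicit. Unset Printing Implicit Defensive.
Import GRing.Theory.

(* Basis of Lambda^k(K^n): k-subsets of 'I_n (increasing wedge products). *)
Definition ksub (n k : nat) := {S : {set 'I_n} | #|S| == k}.

(* The (S,T) minor of M: determinant of the submatrix with rows S and
   columns T, both listed in increasing order. This is the matrix entry
   of Lambda^k(M) in the wedge basis. *)
Definition minor (K : fieldType) (n : nat) (M : 'M[K]_n) (k : nat)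
    (S T : {set 'I_n}) : K :=
  \det (\matrix_(a < k, b < k)
     match nth None [seq Some i | i <- enum S] a,
           nth None [seq Some j | j <- enum T] b with
     | Some i, Some j => M i j
     | _, _ => 0%R
     end).

(* A tensor product of exterior powers is given by a list of factors
   (v, k), meaning Lambda^k(E_v), E_v = K^(d v). *)
Definition tidx (V : finType) (d : V -> nat) (s : seq (V * nat)) :=
  {dffun forall i : 'I_(size s),
     ksub (d (tnth (in_tuple s) i).1) (tnth (in_tuple s) i).2}.

(* Matrix of the action of g = (g_v)_v on the tensor product (Kronecker
   product of the exterior-power matrices). *)
Definition trep (K : fieldType) (V : finType) (d : V -> nat)
    (s : seq (V * nat)) (g : forall v : V, 'M[K]_(d v)) (x y : tidx d s) : K :=
  (\prod_(i < size s)
     minor (g (tnth (in_tuple s) i).1) (tnth (in_tuple s) i).2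
           (val (x i)) (val (y i)))%R.

(* Hom_H(M2, M1) <> 0, where H is given as a predicate on tuples g:
   there is a nonzero linear map phi : M2 -> M1 (matrix indexed by
   (basis of M1) x (basis of M2)) with phi rho2(g) = rho1(g) phi. *)
Definition hom_nonzero (K : fieldType) (V : finType) (d : V -> nat)
    (s2 s1 : seq (V * nat)) (H : (forall v : V, 'M[K]_(d v)) -> Prop) : Prop :=
  exists phi : tidx d s1 -> tidx d s2 -> K,
    (exists x y, phi x y != 0%R) /\
    forall g, H g -> forall (x : tidx d s1) (z : tidx d s2),
      (\sum_(y : tidx d s2) phi x y * trep g y z
       = \sum_(y : tidx d s1) trep g x y * phi y z)%R.

Definition inH (K : comUnitRingType) (V Omega : finType) (iq jq : Omega -> V)
    (d : V -> nat) (hd : forall q, d (iq q) = d (jq q))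
    (g : forall v : V, 'M[K]_(d v)) : Prop :=
  (forall v, g v \in unitmx) /\
  (forall q, castmx (hd q, hd q) (g (iq q)) = g (jq q)).

(* W_v = E_v^*  iff  v = j_q for some q. *)
Definition isdual (V Omega : finType) (jq : Omega -> V) (v : V) : bool :=
  [exists q, jq q == v].

Definition isord (V Omega : finType) (iq jq : Omega -> V) (v : V) : bool :=
  ~~ [exists q, (iq q == v) || (jq q == v)].

Definition inA1 (V A Omega : finType) (src tgt : A -> V) (jq : Omega -> V)
  (a : A) : bool := ~~ isdual jq (src a) && ~~ isdual jq (tgt a).
Definition inA2 (V A Omega : finType) (src tgt : A -> V) (jq : Omega -> V)
  (a : A) : bool := ~~ isdual jq (src a) && isdual jq (tgt a).
Definition inA3 (V A Omega : finType) (src tgt : A -> V) (jq : Omega -> V)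
  (a : A) : bool := isdual jq (src a) && ~~ isdual jq (tgt a).

(* Lambda^lambda(E_v) as a list of factors. *)
Definition lamf (V : finType) (v : V) (p : seq nat) : seq (V * nat) :=
  [seq (v, k) | k <- p].

(* Lambda_1(Theta) and Lambda_2(Theta); part a is lambda_a, mu_a or gamma_a
   according to the class of a. *)
Definition Lam1 (V A Omega : finType) (src tgt : A -> V) (jq : Omega -> V)
    (part : A -> seq nat) : seq (V * nat) :=
  flatten [seq (if inA1 src tgt jq a then lamf (src a) (part a)
                else if inA2 src tgt jq a then
                  lamf (tgt a) (part a) ++ lamf (src a) (part a)
                else [::]) | a <- enum A].

Definition Lam2 (V A Omega : finType) (src tgt : A -> V) (jq : Omega -> V)
    (part : A -> seq nat) : seq (V * nat) :=
  flatten [seq (if inA1 src tgt jq a then lamf (tgt a) (part a)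
                else if inA3 src tgt jq a then
                  lamf (tgt a) (part a) ++ lamf (src a) (part a)
                else [::]) | a <- enum A].

Definition is_partition (p : seq nat) : bool := sorted geq p.

(* Main.v *)
Require Import Defs.
From HB Require Import structures.
From mathcomp Require Import all_boot all_order all_algebra.
From mathcomp Require Import zify.
Import GRing.Theory.
Local Open Scope ring_scope.

Lemma exists_nonroot (K : closedFieldType) (m : nat) : (0 < m)%N ->
  exists u : K, u != 0 /\ u ^+ m != 1.
Proof.
move=> m0.
have [x hx] := (@GRing.solve_monicpoly K (m + m)%N (fun i => if (i <= 1)%N then 1 else 0) (ltn_addr m m0) : exists x : K, _).
have hn : (m + m = (m + m - 2).+2)%N by lia.
move: hx; rewrite hn !big_ord_recl /= big1 ?addr0; last by move=> i _; rewrite mul0r.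
rewrite !mul1r expr0 expr1 -hn => hx.
have x0 : x != 0.
  apply/eqP=> x0; move: hx; rewrite x0 expr0n addr0 (gtn_eqF (ltn_addr m m0)) => /eqP.
  by rewrite eq_sym oner_eq0.
exists x; split => //; apply/negP => /eqP hm.
move: hx; rewrite exprD hm mul1r => hx.
have e := addrI 1 (etrans (addr0 1) hx).
by rewrite -e eqxx in x0.
Qed.

Lemma pow_inj (K : closedFieldType) (a b : nat) :
  (forall u : K, u != 0 -> u ^+ a = u ^+ b) -> a = b.
Proof.
wlog lab : a b / (a <= b)%N.
  move=> W H; case: (leqP a b) => h; first exact: W.
  by symmetry; apply: W; [exact: ltnW | move=> u /H ->].
move=> H; apply/eqP; rewrite eqn_leq lab /=; rewrite leqNgt; apply/negP => ltab.
have [u [u0 um]] := @exists_nonroot K (b - a) (ltac:(by rewrite subn_gt0)).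
move: (H u u0); rewrite -(subnKC lab) exprD => /eqP.
rewrite -{1}(mulr1 (u ^+ a)) (inj_eq (mulfI (expf_neq0 a u0))) eq_sym.
by rewrite (negbTE um).
Qed.

Lemma nth_Some_mem (T : eqType) (s : seq T) b j :
  nth None [seq Some i | i <- s] b = Some j -> j \in s.
Proof.
elim: s b => [|x s IH] [|b] //= => [[->]|/IH]; rewrite inE ?eqxx //.
by move=> ->; rewrite orbT.
Qed.

Lemma minor_scalar (K : fieldType) n (t : K) k (S T : {set 'I_n}) :
  #|S| = k -> #|T| = k -> minor (t%:M) k S T = if S == T then t ^+ k else 0.
Proof.
move=> cS cT; rewrite /minor.
case: eqP => [<-|neST].
  case: n S T cS cT => [|n] S T cS cT.
    have : k = 0%N by rewrite -cS; apply/eqP; rewrite cards_eq0; apply/eqP/setP => -[].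
    move=> k0; move: cS cT; rewrite k0 => cS cT; rewrite expr0; apply: det_mx00.
  rewrite -[RHS](@det_scalar _ k t); congr (\det _); apply/matrixP => a b.
  have sz : size (enum S) = k by rewrite -cardE.
  rewrite !mxE !(nth_map ord0) ?sz // !mxE.
  by rewrite nth_uniq ?sz ?enum_uniq.
have [i iS iT] : exists2 i, i \in S & i \notin T.
  apply/subsetPn/negP => sub; apply: neST; apply/eqP.
  by rewrite eqEcard sub cS cT leqnn.
have sz : size (enum S) = k by rewrite -cardE.
have ik : (index i (enum S) < k)%N by rewrite -sz index_mem mem_enum.
rewrite (expand_det_row _ (Ordinal ik)) big1 // => j _.
rewrite !mxE /= (nth_map i) ?sz // nth_index ?mem_enum //.
case E: (nth None _ _) => [jj|]; last by rewrite mul0r.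
rewrite mxE; case: eqP => [e|]; last by rewrite mul0r.
by move/nth_Some_mem: E; rewrite mem_enum -e (negbTE iT).
Qed.
Lemma trep_scalar (K : fieldType) (V : finType) (d : V -> nat) (s : seq (V * nat))
  (tv : V -> K) (x y : tidx d s) :
  trep (fun v => (tv v)%:M) x y = if x == y then \prod_(p <- s) tv p.1 ^+ p.2 else 0.
Proof.
rewrite /trep; case: eqP => [<-|nxy].
  rewrite big_tnth; apply: eq_bigr => i _.
  by rewrite minor_scalar ?eqxx //; apply/eqP; exact: (valP (x i)).
have : ~~ [forall i, x i == y i].
  by apply/negP => /forallP H; apply: nxy; apply/ffunP => i; apply/eqP/H.
move/forallPn => [i hi].
rewrite (bigD1 i) //= minor_scalar; first by rewrite val_eqE (negbTE hi) mul0r.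
  by apply/eqP; exact: (valP (x i)).
by apply/eqP; exact: (valP (y i)).
Qed.

Lemma castmx_scalar (K : fieldType) n m (e : n = m) (c : K) :
  castmx (e, e) (c%:M : 'M_n) = c%:M.
Proof. by case: m / e; rewrite castmx_id. Qed.

Definition wt (V : finType) (G : pred V) (s : seq (V * nat)) : nat :=
  (\sum_(p <- s | G p.1) p.2)%N.
Arguments wt {V}.

Lemma prod_wt (K : fieldType) (V : finType) (G : pred V) (u : K) s :
  \prod_(p <- s) (if G p.1 then u else 1) ^+ p.2 = u ^+ wt G s.
Proof.
elim: s => [|p s IH]; first by rewrite /wt !big_nil expr0.
rewrite big_cons /wt big_cons -/(wt G s) IH.
by case: (G p.1); rewrite ?exprD // expr1n mul1r.
Qed.

Lemma wt_eq (K : closedFieldType) (V A Omega : finType)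
  (src tgt : A -> V) (iq jq : Omega -> V) (d : V -> nat)
  (hd : forall q : Omega, d (iq q) = d (jq q)) (part : A -> seq nat)
  (hom : hom_nonzero (Lam2 src tgt jq part) (Lam1 src tgt jq part)
           (@inH K V Omega iq jq d hd))
  (G : pred V) (hG : forall q, G (iq q) = G (jq q)) :
  wt G (Lam1 src tgt jq part) = wt G (Lam2 src tgt jq part).
Proof.
case: hom => phi [[x [z nz]] heq].
apply: (@pow_inj K) => u u0.
pose tv v := if G v then u else 1.
have Hg : inH hd (fun v => (tv v)%:M).
  split.
    move=> v; rewrite unitmxE det_scalar unitrX // unitfE /tv.
    by case: (G v) => //; exact: oner_neq0.
  by move=> q; rewrite castmx_scalar /tv hG.
have := heq _ Hg x z.
rewrite (bigD1 z) //= [X in _ + X]big1 ?addr0 => [|y nyz]; last first.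
  by rewrite trep_scalar (negbTE nyz) mulr0.
rewrite [in RHS](bigD1 x) //= [X in _ + X]big1 ?addr0 => [|y nyx]; last first.
  by rewrite trep_scalar eq_sym (negbTE nyx) mul0r.
rewrite !trep_scalar !eqxx.
rewrite -!prod_wt mulrC => /mulIf e.
by symmetry; apply: e.
Qed.

Lemma wt_lamf (V : finType) (G : pred V) v p : wt G (lamf v p) = (G v * sumn p)%N.
Proof.
rewrite /wt /lamf big_map /=; case: (G v); last by rewrite big_pred0.
by rewrite mul1n sumnE.
Qed.

Lemma wt_cat (V : finType) (G : pred V) s1 s2 : wt G (s1 ++ s2) = (wt G s1 + wt G s2)%N.
Proof. by rewrite /wt big_cat. Qed.

Definition F1 (V A Omega : finType) (src tgt : A -> V) (jq : Omega -> V)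
  (r : A -> nat) (G : pred V) (a : A) : nat :=
  if inA1 src tgt jq a then (G (src a) * r a)%N
  else if inA2 src tgt jq a then ((G (tgt a) + G (src a)) * r a)%N else 0%N.
Definition F2 (V A Omega : finType) (src tgt : A -> V) (jq : Omega -> V)
  (r : A -> nat) (G : pred V) (a : A) : nat :=
  if inA1 src tgt jq a then (G (tgt a) * r a)%N
  else if inA3 src tgt jq a then ((G (tgt a) + G (src a)) * r a)%N else 0%N.
Arguments F1 {V A Omega}.
Arguments F2 {V A Omega}.

Lemma wt_Lam1 (V A Omega : finType) (src tgt : A -> V) (jq : Omega -> V)
  (part : A -> seq nat) (r : A -> nat) (hr : forall a, sumn (part a) = r a)
  (G : pred V) :
  wt G (Lam1 src tgt jq part) = (\sum_a F1 src tgt jq r G a)%N.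
Proof.
rewrite /Lam1 /wt big_flatten big_map big_enum /=; apply: eq_bigr => a _.
rewrite -/(wt G _) /F1; case: ifP => _; first by rewrite wt_lamf hr.
by case: ifP => _; rewrite ?wt_cat ?wt_lamf ?hr ?mulnDl // /wt big_nil.
Qed.

Lemma wt_Lam2 (V A Omega : finType) (src tgt : A -> V) (jq : Omega -> V)
  (part : A -> seq nat) (r : A -> nat) (hr : forall a, sumn (part a) = r a)
  (G : pred V) :
  wt G (Lam2 src tgt jq part) = (\sum_a F2 src tgt jq r G a)%N.
Proof.
rewrite /Lam2 /wt big_flatten big_map big_enum /=; apply: eq_bigr => a _.
rewrite -/(wt G _) /F2; case: ifP => _; first by rewrite wt_lamf hr.
by case: ifP => _; rewrite ?wt_cat ?wt_lamf ?hr ?mulnDl // /wt big_nil.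
Qed.

Lemma sum2 (A : finType) (f : A -> nat) : (\sum_a (2 * f a) = 2 * \sum_a f a)%N.
Proof. by rewrite big_distrr. Qed.

Local Close Scope ring_scope.
Theorem lemma2p2 (K : closedFieldType) (V A Omega : finType)
  (src tgt : A -> V) (iq jq : Omega -> V) (d : V -> nat)
  (hiq : injective iq) (hjq : injective jq)
  (hij : forall q q' : Omega, iq q != jq q')
  (hd : forall q : Omega, d (iq q) = d (jq q))
  (hA : forall a : A, ~~ (isdual jq (src a) && isdual jq (tgt a)))
  (part : A -> seq nat) (r : A -> nat)
  (hpart : forall a : A, is_partition (part a))
  (hr : forall a : A, sumn (part a) = r a)
  (hom : hom_nonzero (Lam2 src tgt jq part) (Lam1 src tgt jq part)
           (@inH K V Omega iq jq d hd)) :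
  [/\ \sum_(a | inA2 src tgt jq a) r a = \sum_(a | inA3 src tgt jq a) r a,
      (forall v : V, isord iq jq v ->
         \sum_(a | tgt a == v) r a = \sum_(a | src a == v) r a)
    & (forall q : Omega,
         \sum_(a | tgt a == iq q) r a + \sum_(a | src a == jq q) r a
         = \sum_(a | src a == iq q) r a + \sum_(a | tgt a == jq q) r a)].
Proof.
have key := @wt_eq K V A Omega src tgt iq jq d hd part hom.
split.
- have := key predT (fun _ => erefl).
  rewrite (@wt_Lam1 _ _ _ src tgt jq part r hr) (@wt_Lam2 _ _ _ src tgt jq part r hr).
  have e1 : forall a, F1 src tgt jq r predT a =
     ((if inA1 src tgt jq a then r a else 0) + (if inA2 src tgt jq a then r a else 0) + (if inA2 src tgt jq a then r a else 0))%N.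
    move=> a; move: (hA a); rewrite /F1 /inA1 /inA2 /=.
    by case: (isdual jq (src a)); case: (isdual jq (tgt a)) => //=; lia.
  have e2 : forall a, F2 src tgt jq r predT a =
     ((if inA1 src tgt jq a then r a else 0) + (if inA3 src tgt jq a then r a else 0) + (if inA3 src tgt jq a then r a else 0))%N.
    move=> a; move: (hA a); rewrite /F2 /inA1 /inA3 /=.
    by case: (isdual jq (src a)); case: (isdual jq (tgt a)) => //=; lia.
  rewrite (eq_bigr _ (fun a _ => e1 a)) (eq_bigr _ (fun a _ => e2 a)).
  rewrite !big_split -!big_mkcond /=; lia.
- move=> v hv.
  have dv : isdual jq v = false.
    apply/negbTE; apply: contra hv => /existsP [q /eqP e].
    by apply/existsP; exists q; rewrite e eqxx orbT.
  move/existsPn: hv => hv.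
  have hG : forall q, pred1 v (iq q) = pred1 v (jq q).
    by move=> q; move: (hv q); rewrite /=; case: (iq q == v); case: (jq q == v).
  have := key (pred1 v) hG.
  rewrite (@wt_Lam1 _ _ _ src tgt jq part r hr) (@wt_Lam2 _ _ _ src tgt jq part r hr).
  have e1 : forall a, F1 src tgt jq r (pred1 v) a = (if src a == v then r a else 0)%N.
    move=> a.
    have ds : (src a == v) ==> ~~ isdual jq (src a) by apply/implyP => /eqP ->; rewrite dv.
    have dt : (tgt a == v) ==> ~~ isdual jq (tgt a) by apply/implyP => /eqP ->; rewrite dv.
    move: ds dt (hA a); rewrite /F1 /inA1 /inA2 /=.
    case: (src a == v); case: (tgt a == v);
      case: (isdual jq (src a)); case: (isdual jq (tgt a)) => //=; lia.
  have e2 : forall a, F2 src tgt jq r (pred1 v) a = (if tgt a == v then r a else 0)%N.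
    move=> a.
    have ds : (src a == v) ==> ~~ isdual jq (src a) by apply/implyP => /eqP ->; rewrite dv.
    have dt : (tgt a == v) ==> ~~ isdual jq (tgt a) by apply/implyP => /eqP ->; rewrite dv.
    move: ds dt (hA a); rewrite /F2 /inA1 /inA3 /=.
    case: (src a == v); case: (tgt a == v);
      case: (isdual jq (src a)); case: (isdual jq (tgt a)) => //=; lia.
  rewrite (eq_bigr _ (fun a _ => e1 a)) (eq_bigr _ (fun a _ => e2 a)) -!big_mkcond.
  by move=> ->.
- move=> q.
  pose G := fun w => (w == iq q) || (w == jq q).
  have hG : forall q', G (iq q') = G (jq q').
    move=> q'; rewrite /G; case: (eqVneq q' q) => [->|nq]; first by rewrite !eqxx orbT.
    rewrite (inj_eq hiq) (inj_eq hjq) (negbTE nq) /= [jq q' == iq q]eq_sym.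
    by rewrite (negbTE (hij q q')) (negbTE (hij q' q)).
  have di : isdual jq (iq q) = false.
    by apply/negbTE/existsPn => q'; rewrite eq_sym; exact: hij.
  have dj : isdual jq (jq q) = true by apply/existsP; exists q.
  have := key G hG.
  rewrite (@wt_Lam1 _ _ _ src tgt jq part r hr) (@wt_Lam2 _ _ _ src tgt jq part r hr).
  have e1 : forall a, F1 src tgt jq r G a = ((if src a == iq q then r a else 0) + (if tgt a == jq q then r a else 0))%N.
    move=> a.
    have ds1 : (src a == iq q) ==> ~~ isdual jq (src a) by apply/implyP => /eqP ->; rewrite di.
    have dt1 : (tgt a == iq q) ==> ~~ isdual jq (tgt a) by apply/implyP => /eqP ->; rewrite di.
    have ds2 : (src a == jq q) ==> isdual jq (src a) by apply/implyP => /eqP ->; rewrite dj.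
    have dt2 : (tgt a == jq q) ==> isdual jq (tgt a) by apply/implyP => /eqP ->; rewrite dj.
    move: ds1 dt1 ds2 dt2 (hA a); rewrite /F1 /inA1 /inA2 /G /=.
    case: (src a == iq q); case: (tgt a == iq q); case: (src a == jq q); case: (tgt a == jq q);
      case: (isdual jq (src a)); case: (isdual jq (tgt a)) => //=; lia.
  have e2 : forall a, F2 src tgt jq r G a = ((if tgt a == iq q then r a else 0) + (if src a == jq q then r a else 0))%N.
    move=> a.
    have ds1 : (src a == iq q) ==> ~~ isdual jq (src a) by apply/implyP => /eqP ->; rewrite di.
    have dt1 : (tgt a == iq q) ==> ~~ isdual jq (tgt a) by apply/implyP => /eqP ->; rewrite di.
    have ds2 : (src a == jq q) ==> isdual jq (src a) by apply/implyP => /eqP ->; rewrite dj.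
    have dt2 : (tgt a == jq q) ==> isdual jq (tgt a) by apply/implyP => /eqP ->; rewrite dj.
    move: ds1 dt1 ds2 dt2 (hA a); rewrite /F2 /inA1 /inA3 /G /=.
    case: (src a == iq q); case: (tgt a == iq q); case: (src a == jq q); case: (tgt a == jq q);
      case: (isdual jq (src a)); case: (isdual jq (tgt a)) => //=; lia.
  rewrite (eq_bigr _ (fun a _ => e1 a)) (eq_bigr _ (fun a _ => e2 a)) !big_split -!big_mkcond.
  by move=> ->.
Qed.
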